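(* Let $X$ be a finite nonempty set partitioned into nonempty classes $(C_j)_{j\in J}$, choose $r_j\in C_j$ for each $j$, and set $R=\{r_j:j\in J\}$, $I=X\setminus R$, $\mathcal A=\mathcal P(X)$. Choose weights $w_j\in\{0,1\}$ with $\sum_j w_j>0$ and define $\mu(B)=\sum_{j\in J:\,r_j\in B}w_j$ for $B\subseteq X$. Define $\Pi_R:X\to R$ by $\Pi_R(x)=r_j$ for $x\in C_j$, $G=\bigcup_{j\in J}(C_j\times C_j)$, $E_0=\mu(X)$, $\eta=0$, and let $\mu^{\otimes2}(S)=\sum_{(x,y)\in S}m(x)m(y)$ for $S\subseteq X\times X$, where $m(x)=\mu(\{x\})$. Then $(X,\mathcal A,\mu,\mu^{\otimes2},R,I,\Pi_R,G,E_0,\eta)$ is an admissible structural model. In particular, there exist finite admissible structural models in which $G$ is not contained in the diagonal (namely whenever some $C_j$ has more than one element).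
   Context: For relations, $H\circ K=\{(x,z):\exists y\,(x,y)\in H,(y,z)\in K\}$. An admissible structural model is a tuple $(X,\mathcal A,\mu,\mu^{\otimes2},R,I,\Pi_R,G,E_0,\eta)$ with $X$ nonempty, $\mathcal A$ an algebra on $X$, $\mu:\mathcal A\to[0,\infty)$ finitely additive, $\mu^{\otimes2}$ finitely additive on the product algebra with $\mu^{\otimes2}(B_1\times B_2)=\mu(B_1)\mu(B_2)$, $R,I\in\mathcal A$ disjoint, $\Pi_R:X\to R$, $G$ in the product algebra, $E_0>0$, $\eta\in[0,1]$, satisfying: Axiom I: $\Pi_R\circ\Pi_R=\Pi_R$, $\Pi_R|_R=\mathrm{id}_R$, $\Pi_R^{-1}(B)\in\mathcal A$ for measurable $B\subseteq R$; Axiom II: $G$ reflexive, symmetric, $G\circ G=G$; Axiom III: $\mu(R)+\mu(I)=E_0$, $\mu(\Pi_R^{-1}(B))=\mu(B)$ for measurable $B\subseteq R$, and for all $B\in\mathcal A$, $\mu^{\otimes2}((B\times X)\cap G)=\mu(B)+\eta\,\mu^{\otimes2}((\Pi_R^{-1}(B)\times X)\cap G)$. *)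

(* Defs.v *)
From HB Require Import structures.
From mathcomp Require Import all_boot all_order all_algebra.
From mathcomp Require Import boolp classical_sets reals.
Set Implicit Arguments. Unset Strict Implicit. Unset Printing Implicit Defensive.
Import Order.TTheory GRing.Theory Num.Theory.
Local Open Scope classical_set_scope.
Local Open Scope ring_scope.

Definition is_algebra (T : Type) (A : set (set T)) : Prop :=
  A set0 /\ (forall B, A B -> A (~` B)) /\
  (forall B C, A B -> A C -> A (B `|` C)).

Definition prod_algebra (T : Type) (A : set (set T)) : set (set (T * T)) :=
  fun S => forall P : set (set (T * T)), is_algebra P ->
    (forall B1 B2, A B1 -> A B2 -> P (B1 `*` B2)) -> P S.

Definition fin_additive (R : realType) (T : Type) (A : set (set T))
  (mu : set T -> R) : Prop :=
  mu set0 = 0 /\ (forall B, A B -> 0 <= mu B) /\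
  (forall B C, A B -> A C -> B `&` C = set0 -> mu (B `|` C) = mu B + mu C).

Definition rel_comp (T : Type) (H K : set (T * T)) : set (T * T) :=
  [set p | exists y, H (p.1, y) /\ K (y, p.2)].

(* Admissible structural model (X, A, mu, mu2, R, I, Pi_R, G, E0, eta),
   with X the whole carrier type T. *)
Definition admissible (Rl : realType) (T : Type) (A : set (set T))
  (mu : set T -> Rl) (mu2 : set (T * T) -> Rl) (Rs Is : set T)
  (Pi : T -> T) (G : set (T * T)) (E0 eta : Rl) : Prop :=
  [/\ (exists x : T, True), is_algebra A, fin_additive A mu,
      fin_additive (prod_algebra A) mu2 &
      [/\ (forall B1 B2, A B1 -> A B2 -> mu2 (B1 `*` B2) = mu B1 * mu B2),
          A Rs /\ A Is /\ Rs `&` Is = set0,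
          (forall x, Rs (Pi x)),
          prod_algebra A G /\ 0 < E0 /\ 0 <= eta <= 1 &
  [/\ (forall x, Pi (Pi x) = Pi x),
      (forall x, Rs x -> Pi x = x),
      (forall B, A B -> B `<=` Rs -> A (Pi @^-1` B)),
      (forall x, G (x, x)) /\ (forall x y, G (x, y) -> G (y, x)) /\
      rel_comp G G = G &
  [/\ mu Rs + mu Is = E0,
      (forall B, A B -> B `<=` Rs -> mu (Pi @^-1` B) = mu B) &
      (forall B, A B -> mu2 ((B `*` setT) `&` G) =
                        mu B + eta * mu2 (((Pi @^-1` B) `*` setT) `&` G))]]]].

(* Main.v *)
Require Import Defs.
From HB Require Import structures.
From mathcomp Require Import all_boot all_order all_algebra.
From mathcomp Require Import boolp classical_sets reals.
Import Order.TTheory GRing.Theory Num.Theory.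
Local Open Scope classical_set_scope.
Local Open Scope ring_scope.
Lemma sum_set0 (Rl : realType) (I : finType) (F : I -> Rl) :
  \sum_(i | `[< set0 i >]) F i = 0.
Proof. by rewrite big_pred0 // => i; apply: asboolF. Qed.

Lemma sum_add (Rl : realType) (I : finType) (F : I -> Rl) (P Q : set I) :
  P `&` Q = set0 ->
  \sum_(i | `[< (P `|` Q) i >]) F i =
  \sum_(i | `[< P i >]) F i + \sum_(i | `[< Q i >]) F i.
Proof.
move=> hPQ; rewrite !(big_mkcond (fun i => `[< _ >])) -big_split.
apply: eq_bigr => i _ /=.
case: (pselect (P i)) => Pi; case: (pselect (Q i)) => Qi.
- have : (P `&` Q) i by split.
  by rewrite hPQ.
- rewrite (asboolT (P := (P `|` Q) i)); last by left.
  by rewrite (asboolT Pi) (asboolF Qi) addr0.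
- rewrite (asboolT (P := (P `|` Q) i)); last by right.
  by rewrite (asboolT Qi) (asboolF Pi) add0r.
- rewrite !asboolF ?addr0 //. by case.
Qed.

Lemma m_closed (Rl : realType) (X J : finType) (c : X -> J) (r : J -> X)
  (hr : forall j, c (r j) = j) (w : J -> Rl) (x : X) :
  \sum_(j | `[< [set x] (r j) >]) w j = if r (c x) == x then w (c x) else 0.
Proof.
case: eqP => h.
- rewrite (big_pred1 (c x)) // => j /=.
  apply/asboolP/eqP => [<-|->]; first by rewrite hr.
  exact: h.
- rewrite big_pred0 // => j; apply/asboolP => hj; apply: h.
  by rewrite /= in hj; rewrite -hj hr.
Qed.

Lemma mu_sum (Rl : realType) (X J : finType) (r : J -> X) (w : J -> Rl)
  (B : set X) :
  \sum_(j | `[< B (r j) >]) w j =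
  \sum_(x | `[< B x >]) \sum_(j | `[< [set x] (r j) >]) w j.
Proof.
rewrite (partition_big r (fun x => `[< B x >])) //.
apply: eq_bigr => x Bx; apply: eq_bigl => j.
apply/idP/idP => [/andP[_ /eqP ->]|/asboolP /= ->].
- by apply/asboolP.
- by rewrite eqxx andbT.
Qed.

Lemma class_sum (Rl : realType) (X J : finType) (c : X -> J) (r : J -> X)
  (hr : forall j, c (r j) = j) (w : J -> Rl) (k : J) :
  \sum_(y | c y == k) (if r (c y) == y then w (c y) else 0) = w k.
Proof.
rewrite (bigD1 (r k)) /= ?hr ?eqxx //.
rewrite big1 ?addr0 // => y /andP[/eqP hy hne].
by rewrite hy eq_sym (negbTE hne).
Qed.

Lemma all_in_prod (T : finType) (S : set (T * T)) :
  forall P : set (set (T * T)), [/\ P set0, (forall B, P B -> P (~` B)) &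
    (forall B C, P B -> P C -> P (B `|` C))] ->
    (forall B1 B2, P (B1 `*` B2)) -> P S.
Proof.
move=> P [P0 PC PU] Prect.
have H : forall s : seq (T * T), P [set p | p \in s /\ S p].
  elim => [|a s IH].
    have -> : [set p | p \in [::] /\ S p] = set0 by apply/seteqP; split => p [].
    exact: P0.
  case: (pselect (S a)) => Sa.
    have -> : [set p | p \in a :: s /\ S p] =
        ([set a.1] `*` [set a.2]) `|` [set p | p \in s /\ S p].
      apply/seteqP; split => p /=.
        rewrite in_cons => -[/orP[/eqP ->|ps] Sp]; [by left | by right].
      case => [[]|[ps Sp]].
        by case: p => p1 p2; case: a Sa => a1 a2 Sa /= -> ->; rewrite in_cons eqxx.
      by rewrite in_cons ps orbT.
    by apply: PU => //; apply: Prect.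
  have -> : [set p | p \in a :: s /\ S p] = [set p | p \in s /\ S p].
    apply/seteqP; split => p /=.
      rewrite in_cons => -[/orP[/eqP ->|ps] Sp] //.
    by case => ps Sp; rewrite in_cons ps orbT.
  exact: IH.
have -> : S = [set p : T * T | p \in enum (@predT (T * T)%type) /\ S p].
  by apply/seteqP; split => p /=; [move=> Sp; rewrite mem_enum | case].
exact: H.
Qed.

Theorem proposition5p10 (Rl : realType) (X J : finType) (x0 : X)
  (c : X -> J) (hcls : forall j, exists x, c x = j)
  (r : J -> X) (hr : forall j, c (r j) = j)
  (w : J -> Rl) (hw : forall j, w j = 0 \/ w j = 1)
  (hwpos : 0 < \sum_(j : J) w j) :
  let mu : set X -> Rl := fun B => \sum_(j : J | `[< B (r j) >]) w j in
  let m : X -> Rl := fun x => mu [set x] in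
  let mu2 : set (X * X) -> Rl :=
    fun S => \sum_(p : X * X | `[< S p >]) m p.1 * m p.2 in
  let Rs : set X := [set x | exists j, r j = x] in
  let Is : set X := ~` Rs in
  let Pi : X -> X := fun x => r (c x) in
  let G : set (X * X) := [set p | c p.1 = c p.2] in
  admissible (setT : set (set X)) mu mu2 Rs Is Pi G (mu setT) 0 /\
  ((exists x y : X, c x = c y /\ x <> y) ->
     ~ (G `<=` [set p | p.1 = p.2])).
Proof.
move=> mu m mu2 Rs Is Pi G.
have m_ge0 : forall x, 0 <= m x.
  by move=> x; apply: sumr_ge0 => j _; case: (hw j) => ->.
have mE : forall x, m x = if r (c x) == x then w (c x) else 0.
  by move=> x; exact: m_closed.
have muE : forall B, mu B = \sum_(x | `[< B x >]) m x.
  by move=> B; exact: mu_sum.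
have mu_add : fin_additive setT mu.
  split; first exact: sum_set0.
  split; first by move=> B _; apply: sumr_ge0 => j _; case: (hw j) => ->.
  move=> B C _ _ hBC; rewrite /mu.
  rewrite (@sum_add _ _ w (fun j => B (r j)) (fun j => C (r j))) //.
  apply/seteqP; split => j // [hb hc].
  have : (B `&` C) (r j) by split.
  by rewrite hBC.
have mu2_add : fin_additive (prod_algebra setT) mu2.
  split; first exact: sum_set0.
  split; first by move=> B _; apply: sumr_ge0 => p _; apply: mulr_ge0.
  by move=> B C _ _ hBC; rewrite /mu2 sum_add.
split; last first.
  move=> [x [y [hxy hne]]] hsub.
  by apply: hne; exact: (hsub (x, y) hxy).
split.
- by exists x0.
- split; first by [].
  by split.
- exact: mu_add.
- exact: mu2_add.
split.
- move=> B1 B2 _ _.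
  rewrite (muE B1) (muE B2) big_distrl /=.
  rewrite (eq_bigr (fun x => \sum_(y | `[< B2 y >]) m x * m y)); last first.
    by move=> x _; rewrite big_distrr.
  rewrite pair_big_dep /mu2; apply: eq_bigl => -[p1 p2] /=.
  apply/asboolP/andP => [[h1 h2]|[/asboolP h1 /asboolP h2]]; last by split.
  by split; apply/asboolP.
- split; first by [].
  split; first by [].
  by apply/seteqP; split => x // [].
- by move=> x; exists (c x).
- split.
    move=> P hP hrect; apply: (@all_in_prod _ G).
      by case: hP => [a [b d]]; split.
    by move=> B1 B2; apply: hrect.
  split; first by rewrite /mu (eq_bigl predT) ?sumE //; move=> j; apply/asboolP.
  by rewrite lexx ler01.
split.
- by move=> x; rewrite /Pi hr.
- by move=> x [j <-]; rewrite /Pi hr.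
- by [].
- split; first by [].
  split; first by move=> x y hxy; exact: esym hxy.
  apply/seteqP; split => -[x z] /=.
    by move=> [y [h1 h2]]; rewrite /G /=; rewrite /G /= in h1 h2; rewrite h1 h2.
  by move=> hxz; exists z; split.
split.
- have -> : mu Is = 0.
    by rewrite /mu big_pred0 // => j; apply: asboolF => /(_ (ex_intro _ j erefl)).
  rewrite addr0 /mu; apply: eq_bigl => j.
  by rewrite !asboolT //; exists j.
- move=> B _ _; rewrite /mu; apply: eq_bigl => j /=.
  by rewrite /Pi hr.
- move=> B _; rewrite mul0r addr0 /mu2 (muE B).
  rewrite (eq_bigl (fun p : X * X => `[< B p.1 >] && (c p.1 == c p.2))); last first.
    move=> -[p1 p2] /=.
    apply/asboolP/andP => [[[h1 _] h2]|[/asboolP h1 /eqP h2]]; last by [].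
    by split; [apply/asboolP | apply/eqP].
  rewrite -(pair_big_dep (fun x => `[< B x >]) (fun x y => c x == c y) (fun x y => m x * m y)).
  apply: eq_bigr => x _.
  rewrite -big_distrr /=.
  rewrite (eq_bigr (fun y => if r (c y) == y then w (c y) else 0)); last first.
    by move=> y _; rewrite mE.
  rewrite (eq_bigl (fun y => c y == c x)); last by move=> y; rewrite eq_sym.
  rewrite class_sum // mE.
  case: eqP => _; last by rewrite mul0r.
  by case: (hw (c x)) => ->; rewrite ?mul0r ?mulr1.
Qed.
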